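(* Let $q$ be a prime power, $\alpha$ an element of multiplicative order $n$ in $\mathbb{F}_{q^s}$, and $\beta$ an element of multiplicative order $n_\ell$ in $\mathbb{F}_{q_\ell^{s_\ell}}$, where $\mathbb{F}_{q_\ell}=\mathbb{F}_{q^u}$; let $r=\mathrm{lcm}(s,us_\ell)$, so both lie in $\mathbb{F}_{q^r}$. Let $\mathcal{Z}\subseteq\{0,1,\dots,n_\ell-1\}$. If $\gcd(n,n_\ell)=1$, then for all $i,j\in\{0,1,\dots,n-1\}$ with $i\ne j$, $$\gcd\Big(\prod_{m\in\mathcal{Z}}(1-x\alpha^i\beta^m),\ \prod_{m\in\mathcal{Z}}(1-x\alpha^j\beta^m)\Big)=1$$ in $\mathbb{F}_{q^r}[x]$. *)

(* Defs.v *)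
From HB Require Import structures.
From mathcomp Require Import all_boot all_order all_algebra all_field.
Set Implicit Arguments. Unset Strict Implicit. Unset Printing Implicit Defensive.
Import GRing.Theory.
Local Open Scope ring_scope.

Definition zprod (L : fieldType) (nl : nat) (Z : {set 'I_nl}) (a b : L) (i : nat)
  : {poly L} :=
  \prod_(m in Z) (1 - 'X * (a ^+ i * b ^+ m)%:P).

(* Main.v *)
Require Import Defs.
From HB Require Import structures.
From mathcomp Require Import all_boot all_order all_algebra all_field.
Local Open Scope ring_scope.
Import GRing.Theory.

Lemma fac_eqp (L : fieldType) (c : L) : c != 0 ->
  (1 - 'X * c%:P %= 'X - (c^-1)%:P)%R.
Proof.
move=> c0.
have -> : 1 - 'X * c%:P = (- c) *: ('X - (c^-1)%:P).
  rewrite scalerBr -!mul_polyC -polyCM mulNr divff // !polyCN polyC1 opprK.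
  by rewrite mulNr mulrC addrC.
by apply: eqp_scale; rewrite oppr_eq0.
Qed.

Lemma lin_coprime (L : fieldType) (c d : L) : c != 0 -> d != 0 -> c != d ->
  coprimep (1 - 'X * c%:P) (1 - 'X * d%:P).
Proof.
move=> c0 d0 cd.
rewrite (eqp_coprimepl _ (@fac_eqp _ _ c0)) (eqp_coprimepr _ (@fac_eqp _ _ d0)).
apply: coprimep_XsubC2; rewrite subr_eq0; apply: contra cd => /eqP H.
by rewrite -[c]invrK -H invrK.
Qed.

Theorem lemma3 (p k s u sl n nl : nat) (L : finFieldType)
  (alpha beta : L) (Z : {set 'I_nl}) :
  prime p -> (0 < k)%N -> (0 < s)%N -> (0 < u)%N -> (0 < sl)%N ->
  #|L| = ((p ^ k) ^ (lcmn s (u * sl)))%N ->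
  alpha ^+ ((p ^ k) ^ s) = alpha ->
  beta ^+ (((p ^ k) ^ u) ^ sl) = beta ->
  n.-primitive_root alpha ->
  nl.-primitive_root beta ->
  coprime n nl ->
  forall i j : nat, (i < n)%N -> (j < n)%N -> i <> j ->
  coprimep (zprod Z alpha beta i) (zprod Z alpha beta j).
Proof.
move=> _ _ _ _ _ _ _ _ pa pb cop i j ilt jlt ij.
have n0 : (0 < n)%N := prim_order_gt0 pa.
have nl0 : (0 < nl)%N := prim_order_gt0 pb.
have a0 : alpha != 0.
  apply/eqP => a0; move: (prim_expr_order pa); rewrite a0 expr0n.
  by case: n n0 {pa cop ilt jlt} => //= _ _ /eqP; rewrite eq_sym oner_eq0.
have b0 : beta != 0.
  apply/eqP => b0; move: (prim_expr_order pb); rewrite b0 expr0n.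
  by case: nl nl0 {pb cop Z} => //= _ _ /eqP; rewrite eq_sym oner_eq0.
have key : forall m m' : 'I_nl, alpha ^+ i * beta ^+ m != alpha ^+ j * beta ^+ m'.
  move=> m m'; apply/eqP => E.
  have E2 := congr1 (fun x => x ^+ nl) E; move: E2 => /=.
  rewrite !exprMn -!exprM !(mulnC _ nl) !exprM (prim_expr_order pb) !expr1n !mulr1 => /eqP.
  have pa' : n.-primitive_root (alpha ^+ nl).
    by rewrite prim_root_exp_coprime // coprime_sym.
  rewrite (eq_prim_root_expr pa') !modn_small // => /eqP; exact: ij.
rewrite /zprod.
apply: (big_ind (fun q => coprimep q _)); first exact: coprime1p.
  by move=> x y hx hy; rewrite coprimepMl hx hy.
move=> m mZ; rewrite coprimep_sym.
apply: (big_ind (fun q => coprimep q _)); first exact: coprime1p.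
  by move=> x y hx hy; rewrite coprimepMl hx hy.
move=> m' m'Z; rewrite coprimep_sym.
apply: lin_coprime; rewrite ?mulf_neq0 ?expf_neq0 //.
Qed.
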